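(* Let $(M,d)$ be a metric space, $\mathsf{P}\subseteq M$ a set of $n$ points, and $1\le \ell\le k\le n$ integers; put $m=\lfloor k/\ell\rfloor$. Let $c\ge 1$ and let $Q=\{q_1,\dots,q_m\}\subseteq \mathsf{P}$ be a set of $m$ points that is a $c$-approximate solution to the (non-fault-tolerant) $m$-median problem on $\mathsf{P}$, i.e. $\sum_{p\in\mathsf{P}} d_Q(p,1)\le c\cdot \sigma_{\mathrm{med}}$, where $\sigma_{\mathrm{med}}=\min_{S\subseteq\mathsf{P},|S|=m}\sum_{p\in\mathsf{P}} d_S(p,1)$. Let $C\subseteq\mathsf{P}$ be any set with $|C|=k$ and $C\supseteq \bigcup_{i=1}^m N_{\mathsf{P}}(q_i,\ell)$. Then $$\sum_{p\in\mathsf{P}} d_C(p,\ell)\;\le\;(1+4c)\,\sigma_{\mathrm{opt}},\qquad\text{where } \sigma_{\mathrm{opt}}=\min_{C'\subseteq\mathsf{P},\,|C'|=k}\ \sum_{p\in\mathsf{P}} d_{C'}(p,\ell).$$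
   Context: For a finite set $S\subseteq M$, a point $p\in M$ and an integer $1\le i\le |S|$, $d_S(p,i)$ denotes the radius of the smallest closed ball centered at $p$ containing at least $i$ points of $S$ (the distance from $p$ to its $i$-th nearest neighbor in $S$). The $i$ nearest neighbors of $p$ in $S$ are determined by ordering the points $s\in S$ lexicographically by the pair $(d(p,s),\text{index of } s)$ (points of $\mathsf{P}=\{p_1,\dots,p_n\}$ are indexed), so they are unique; $N_S(p,i)$ denotes the set of the first $i$ points in this order, so $|N_S(p,i)|=i$. The fault-tolerant $k$-median cost of $C$ is $\sum_{p\in\mathsf{P}} d_C(p,\ell)$; the case $\ell=1$ is ordinary $k$-median. *)

(* Defs.v *)
From HB Require Import structures.
From mathcomp Require Import all_boot all_order all_algebra.
Set Implicit Arguments. Unset Strict Implicit. Unset Printing Implicit Defensive.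
Import Order.TTheory GRing.Theory Num.Theory.
Local Open Scope ring_scope.

Definition is_metric (R : realFieldType) (M : Type) (d : M -> M -> R) : Prop :=
  [/\ forall x y, 0 <= d x y,
      forall x y, d x y = 0 <-> x = y,
      forall x y, d x y = d y x
    & forall x y z, d x z <= d x y + d y z].

(* The point set P = {p_1,...,p_n} is given by pts : 'I_n -> M (injective);
   subsets of P are sets of indices {set 'I_n}. *)

Definition dS (R : realFieldType) (M : Type) (d : M -> M -> R) (n : nat)
  (pts : 'I_n -> M) (p : M) (S : {set 'I_n}) (i : nat) : R :=
  nth 0 (sort <=%R [seq d p (pts s) | s <- enum S]) i.-1.

Definition nn_rel (R : realFieldType) (M : Type) (d : M -> M -> R) (n : nat)
  (pts : 'I_n -> M) (p : M) : rel 'I_n :=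
  fun s t => (d p (pts s) < d p (pts t)) ||
             ((d p (pts s) == d p (pts t)) && (s <= t)%N).

Definition NS (R : realFieldType) (M : Type) (d : M -> M -> R) (n : nat)
  (pts : 'I_n -> M) (p : M) (S : {set 'I_n}) (i : nat) : {set 'I_n} :=
  [set s | s \in take i (sort (nn_rel d pts p) (enum S))].

Definition ftcost (R : realFieldType) (M : Type) (d : M -> M -> R) (n : nat)
  (pts : 'I_n -> M) (C : {set 'I_n}) (l : nat) : R :=
  \sum_(j < n) dS d pts (pts j) C l.

(* Main.v *)
Require Import Defs.
From HB Require Import structures.
From mathcomp Require Import all_boot all_order all_algebra.
From mathcomp Require Import zify ring lra.
Import Order.TTheory GRing.Theory Num.Theory.
Local Open Scope ring_scope.


Lemma cnt_enum (T : finType) (S : {set T}) (P : pred T) :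
  count P (enum S) = #|[set x in S | P x]|.
Proof.
rewrite cardE /enum_mem -size_filter -filter_predI.
apply: congr1; apply: eq_filter => x /=. by rewrite !inE andbC.
Qed.

Section K.
Variables (R : realFieldType) (T : finType) (f : T -> R) (S : {set T}).
Let s := sort <=%R [seq f x | x <- enum S].

Lemma s_sorted : sorted <=%R s.
Proof. apply: sort_sorted; exact: le_total. Qed.

Lemma size_s : size s = #|S|.
Proof. by rewrite size_sort size_map cardE. Qed.

Lemma count_s (rho : R) : count (fun v => v <= rho) s = #|[set x in S | f x <= rho]|.
Proof.
have /permP -> : perm_eq s [seq f x | x <- enum S] by rewrite perm_sort.
by rewrite count_map cnt_enum.
Qed.

Lemma kth_cnt (i : nat) : (1 <= i <= #|S|)%N ->
  leq i #|[set x in S | f x <= nth 0 s i.-1]|.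
Proof.
case/andP=> i1 iS; rewrite -count_s; set x := nth 0 s i.-1; rewrite -(cat_take_drop i s) count_cat.
apply: leq_trans (leq_addr _ _).
have st : size (take i s) = i by rewrite size_take size_s; case: ltngtP iS.
have : all (fun v => v <= x) (take i s).
  apply/(all_nthP 0) => j; rewrite st => ji.
  rewrite nth_take //; apply: (le_sorted_leq_nth 0 s_sorted).
  - by rewrite inE size_s (leq_trans ji).
  - by rewrite inE size_s; move: i1 ji iS; move: #|S| => z; clear; lia.
  - by move: i1 ji; clear; lia.
move=> hall; rewrite (_ : count _ (take i s) = i) //; by move: hall; rewrite all_count st => /eqP.
Qed.

Lemma kth_le (i : nat) (rho : R) : (1 <= i)%N ->
  leq i #|[set x in S | f x <= rho]| -> nth 0 s i.-1 <= rho.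
Proof.
case: i => // i _ /= hc; rewrite leNgt; apply/negP => hx.
move: hc; rewrite -count_s -(cat_take_drop i s) count_cat.
have -> : count (fun v => v <= rho) (drop i s) = 0%N.
  apply/eqP; rewrite -leqn0 leqNgt -has_count; apply/hasPn => y /(nthP 0) [j hj <-].
  rewrite nth_drop -ltNge; apply: lt_le_trans hx _.
  rewrite size_drop in hj.
  apply: (le_sorted_leq_nth 0 s_sorted).
  - by rewrite inE; move: hj; move: (size s) => z; lia.
  - by rewrite inE; move: hj; move: (size s) => z; lia.
  - exact: leq_addr.
rewrite addn0 => h.
have := leq_trans h (count_size _ _); rewrite size_take_min.
by rewrite ltnNge geq_minl.
Qed.
End K.

Section NN.
Variables (R : realFieldType) (M : Type) (d : M -> M -> R) (n : nat)
  (pts : 'I_n -> M) (q : M).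

Lemma nn_total : total (nn_rel d pts q).
Proof.
move=> x y; rewrite /nn_rel.
case: (ltgtP (d q (pts x)) (d q (pts y))) => //= _; exact: leq_total.
Qed.

Lemma nn_trans : transitive (nn_rel d pts q).
Proof.
move=> y x z; rewrite /nn_rel.
move=> /orP[h1|/andP[/eqP e1 h1]] /orP[h2|/andP[/eqP e2 h2]].
- by rewrite (lt_trans h1 h2).
- by rewrite -e2 h1.
- by rewrite e1 h2.
- by rewrite e1 e2 eqxx (leq_trans h1 h2) orbT.
Qed.

Lemma NS_near (l : nat) (rho : R) (X : {set 'I_n}) :
  (forall x, x \in X -> d q (pts x) <= rho) -> (l <= #|X|)%N ->
  forall s, s \in NS d pts q [set: 'I_n] l -> d q (pts s) <= rho.
Proof.
move=> hX hl s; rewrite inE => hs; rewrite leNgt; apply/negP => hr.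
set t := sort (nn_rel d pts q) (enum [set: 'I_n]) in hs.
have pw : pairwise (nn_rel d pts q) t.
  by rewrite -(sorted_pairwise nn_trans) sort_sorted //; exact: nn_total.
move: pw; rewrite -{1}(cat_take_drop l t) pairwise_cat => /and3P[/allrelP ha _ _].
have Xin : forall x, x \in X -> x \in take l t.
  move=> x xX; have : x \in take l t ++ drop l t by rewrite cat_take_drop mem_sort mem_enum inE.
  rewrite mem_cat => /orP[//|xd].
  have := ha s x hs xd; rewrite /nn_rel => /orP[h|/andP[/eqP h _]].
  - by have := lt_le_trans (lt_trans (le_lt_trans (hX x xX) hr) h) (lexx _); rewrite ltxx.
  - by have := hX x xX; rewrite -h leNgt hr.
have sX : s \notin X by apply/negP => /hX; rewrite leNgt hr.
have : (#|s |: X| <= #|take l t|)%N.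
  apply: subset_leq_card; apply/subsetP => y; rewrite in_setU1 => /orP[/eqP ->//|].
  exact: Xin.
rewrite cardsU1 sX => h; have := leq_trans h (card_size _).
rewrite size_take_min => h2; have := leq_trans h2 (geq_minl _ _).
by rewrite add1n ltnNge hl.
Qed.
End NN.

Lemma pad (n : nat) (j : nat) (S : {set 'I_n}) : (#|S| + j <= n)%N ->
  exists S2 : {set 'I_n}, S \subset S2 /\ #|S2| = (#|S| + j)%N.
Proof.
elim: j => [|j IH] h; first by exists S; rewrite addn0.
have [|S2 [h1 h2]] := IH; first by move: h; lia.
have : (0 < #|~: S2|)%N.
  have := cardsC S2; rewrite card_ord h2 => e; move: h e; lia.
case/card_gt0P => x; rewrite inE => xS2.
exists (x |: S2); split.
  by apply: (subset_trans h1); apply/subsetP => y yS; rewrite in_setU1 yS orbT.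
by rewrite cardsU1 xS2 h2 addnS.
Qed.

Lemma greedy (R : realFieldType) (n l : nat) (r : 'I_n -> R) (B : 'I_n -> {set 'I_n}) :
  (0 < l)%N -> (forall p, l <= #|B p|)%N ->
  forall N (U : {set 'I_n}), (#|U| <= N)%N ->
  exists S W : {set 'I_n}, [/\ S \subset U,
     (forall x, x \in W -> exists2 p, p \in U & x \in B p),
     (#|S| * l <= #|W|)%N &
     forall p, p \in U -> exists2 s, s \in S & (B s :&: B p != set0) && (r s <= r p)].
Proof.
move=> l0 hB; elim=> [|N IH] U hU; case: (set_0Vmem U) => [->|[x0 xU]].
- by exists set0, set0; split; rewrite ?sub0set ?cards0 // => x; rewrite inE.
- by move: hU; rewrite leqn0 cards_eq0 => /eqP e; move: xU; rewrite e inE.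
- by exists set0, set0; split; rewrite ?sub0set ?cards0 // => x; rewrite inE.
have [p0 p0U p0min] : exists2 p0, p0 \in U & forall p, p \in U -> r p0 <= r p.
  case: (@real_arg_minP _ _ x0 [pred i | i \in U] r xU _) => [i _|i iU imin].
    exact: num_real.
  by exists i.
have Bp0 : B p0 :&: B p0 != set0.
  by rewrite setIid -card_gt0; apply: leq_trans l0 (hB p0).
set U' := [set p in U | B p0 :&: B p == set0].
have hU' : (#|U'| <= N)%N.
  have : (#|U'| < #|U|)%N.
    apply: proper_card; apply/properP; split.
      by apply/subsetP => p; rewrite inE => /andP[].
    by exists p0 => //; rewrite inE p0U /= (negbTE Bp0).
  move=> h; move: h hU; lia.
have [S' [W' [h1 h2 h3 h4]]] := IH U' hU'.
exists (p0 |: S'), (B p0 :|: W'); split.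
- apply/subsetP => p; rewrite in_setU1 => /orP[/eqP ->//|/(subsetP h1)].
  by rewrite inE => /andP[].
- move=> x; rewrite in_setU => /orP[xb|/h2 [p pU' xp]]; first by exists p0.
  by exists p => //; move: pU'; rewrite inE => /andP[].
- have disj : B p0 :&: W' = set0.
    apply/setP => x; rewrite !inE; apply/negP => /andP[xb /h2 [p pU' xp]].
    move: pU'; rewrite inE => /andP[_ /eqP e].
    have : x \in B p0 :&: B p by rewrite inE xb xp.
    by rewrite e inE.
  rewrite (cardsU (B p0) W') disj cards0 subn0.
  have e1 : (#|p0 |: S'| <= 1 + #|S'|)%N by rewrite cardsU1; case: (p0 \notin S').
  apply: leq_trans (leq_mul e1 (leqnn l)) _.
  rewrite mulnDl mul1n; exact: leq_add (hB p0) h3.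
- move=> p pU; case: (boolP (B p0 :&: B p != set0)) => hp.
    by exists p0; rewrite ?setU11 // hp p0min.
  have : p \in U' by rewrite inE pU /= negbK in hp *.
  move=> /h4 [s sS hs]; exists s => //; by rewrite in_setU1 sS orbT.
Qed.

Section Main.
Variables (R : realFieldType) (M : Type) (d : M -> M -> R) (n : nat) (pts : 'I_n -> M).

Lemma dS_le p (S : {set 'I_n}) i rho : (1 <= i)%N ->
  leq i #|[set x in S | d p (pts x) <= rho]| -> dS d pts p S i <= rho.
Proof. exact: (@kth_le R _ (fun x => d p (pts x)) S). Qed.

Lemma dS_cnt p (S : {set 'I_n}) i : (1 <= i <= #|S|)%N ->
  leq i #|[set x in S | d p (pts x) <= dS d pts p S i]|.
Proof. exact: (@kth_cnt R _ (fun x => d p (pts x)) S). Qed.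

Lemma card_NS q l : (l <= n)%N -> #|NS d pts q [set: 'I_n] l| = l.
Proof.
move=> ln; rewrite /NS.
have -> : #|[set s | s \in take l (sort (nn_rel d pts q) (enum [set: 'I_n]))]|
   = #|take l (sort (nn_rel d pts q) (enum [set: 'I_n]))|.
  by apply: eq_card => x; rewrite inE.
have /card_uniqP -> : uniq (take l (sort (nn_rel d pts q) (enum [set: 'I_n]))).
  by apply: take_uniq; rewrite sort_uniq enum_uniq.
by rewrite size_take size_sort -cardE cardsT card_ord; case: ltngtP ln.
Qed.
End Main.

Theorem theorem1 (R : realFieldType) (M : Type) (d : M -> M -> R)
  (n : nat) (pts : 'I_n -> M) (l k : nat) (c : R)
  (Q C : {set 'I_n}) :
  is_metric d ->
  injective pts ->
  (1 <= l)%N -> (l <= k)%N -> (k <= n)%N ->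
  1 <= c ->
  #|Q| = (k %/ l)%N ->
  (forall S : {set 'I_n}, #|S| = (k %/ l)%N ->
     ftcost d pts Q 1 <= c * ftcost d pts S 1) ->
  #|C| = k ->
  (\bigcup_(q in Q) NS d pts (pts q) [set: 'I_n] l) \subset C ->
  forall C' : {set 'I_n}, #|C'| = k ->
    ftcost d pts C l <= (1 + 4 * c) * ftcost d pts C' l.
Proof.
move=> [d0 dE dsym dtri] _ l1 lk kn c1 hQ hQopt hC hsub C' hC'.
have m1 : (1 <= k %/ l)%N by rewrite leq_divRL // mul1n.
pose r j := dS d pts (pts j) C' l.
have rcnt : forall j, leq l #|[set x in C' | d (pts j) (pts x) <= r j]|.
  by move=> j; apply: dS_cnt; rewrite l1 hC'.
have step1 : forall j, dS d pts (pts j) C l <= 2 * dS d pts (pts j) Q 1 + r j.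
  move=> j; set a := dS d pts (pts j) Q 1.
  have : leq 1 #|[set x in Q | d (pts j) (pts x) <= a]|.
    by apply: (@dS_cnt R M d n pts (pts j) Q 1); rewrite hQ m1.
  case/card_gt0P => q; rewrite inE => /andP[qQ hq].
  have hN : forall s, s \in NS d pts (pts q) [set: 'I_n] l ->
      d (pts q) (pts s) <= d (pts q) (pts j) + r j.
    apply: (@NS_near R M d n pts (pts q) l _ [set x in C' | d (pts j) (pts x) <= r j] _ (rcnt j)).
    move=> x; rewrite inE => /andP[_ hx].
    by apply: le_trans (dtri _ (pts j) _) _; rewrite lerD2l.
  apply: dS_le => //.
  rewrite -(@card_NS R M d n pts (pts q) l); last by apply: leq_trans lk kn.
  apply: subset_leq_card; apply/subsetP => s sN; rewrite inE.
  have -> : s \in C.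
    by apply: (subsetP hsub); apply/bigcupP; exists q.
  apply: le_trans (dtri _ (pts q) _) _.
  have h := hN s sN; rewrite (dsym (pts q) (pts j)) in h.
  by move: h hq; lra.
have sum1 : ftcost d pts C l <= 2 * ftcost d pts Q 1 + ftcost d pts C' l.
  rewrite /ftcost mulr_sumr -big_split /=; apply: ler_sum => j _; exact: step1.
pose B p := [set x in C' | d (pts p) (pts x) <= r p].
have [S0 [W [_ hW hSW hcov]]] := @greedy R n l r B l1 rcnt #|[set: 'I_n]| [set: 'I_n] (leqnn _).
have S0m : (#|S0| <= k %/ l)%N.
  rewrite leq_divRL //; apply: leq_trans hSW _; rewrite -hC'.
  apply: subset_leq_card; apply/subsetP => x /hW [p _]; by rewrite inE => /andP[].
have [S [S0S hS]] : exists S : {set 'I_n}, S0 \subset S /\ #|S| = (#|S0| + (k %/ l - #|S0|))%N.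
  by apply: pad; rewrite (subnKC S0m); exact: leq_trans (leq_div k l) kn.
rewrite (subnKC S0m) in hS.
have sum2 : ftcost d pts S 1 <= 2 * ftcost d pts C' l.
  rewrite /ftcost mulr_sumr; apply: ler_sum => j _.
  have [s sS0 /andP[hI hr]] := hcov j (in_setT j).
  case/set0Pn: hI => x; rewrite !inE => /andP[/andP[_ hx1] /andP[_ hx2]].
  apply: dS_le => //; rewrite card_gt0; apply/set0Pn; exists s.
  rewrite inE (subsetP S0S _ sS0) /=.
  apply: le_trans (dtri _ (pts x) _) _; rewrite (dsym (pts x)).
  rewrite -/(r j) -/(r s) in hx1 hx2 *.
  by move: hx1 hx2 hr; lra.
have h2 := hQopt S hS.
have h3 : c * ftcost d pts S 1 <= c * (2 * ftcost d pts C' l).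
  by rewrite ler_pM2l //; lra.
move: sum1 h2 h3; nra.
Qed.
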